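(* Consider the Bak–Sneppen model on a finite connected simple graph $G$ with parameter $p\in(0,1)$, realized via the graphical construction, and fix $L>0$, $k\in\mathbb Z_+$ and adjacent vertices $x\sim y$. If the level-$k$ block $\{x,y\}\times((k-1)L,kL]$ is nice and at least one of $\eta_x((k-1)L)$, $\eta_y((k-1)L)$ equals $0$, then $\eta_x(kL)=\eta_y(kL)=0$.
   Context: Let $G=(V,E)$ be a finite connected simple graph and $p\in(0,1)$. Graphical construction of the Bak–Sneppen model: each vertex $x$ carries an independent rate-$1$ Poisson clock; each ring of the clock at $x$ carries a mark, namely a family of independent Bernoulli$(p)$ values, one for each vertex of the neighbourhood $\{x\}\cup\{y:y\sim x\}$ (marks independent across rings). When the clock at $x$ rings at a time when $\eta_x=0$, or when $\eta_y=1$ for all $y\in V$, the values $\eta_z$ on the neighbourhood of $x$ are set equal to the mark values; otherwise (the ring is ''muted'') nothing happens. For $x\in V$ and $k\in\mathbb Z_+$, the level-$k$ $x$-stick is $\{x\}\times((k-1)L,kL]$. For $A\subseteq\{x\}\cup\{y:y\sim x\}$, the $x$-stick is $A$-good if every clock ring at $x$ during $((k-1)L,kL]$ has mark value $0$ at every vertex of $A$ (a stick with no rings is good). For $x\sim y$, the level-$k$ block $\{x,y\}\times((k-1)L,kL]$ is nice if: (a) the clocks at $x$ and at $y$ each ring at least once during $((k-1)L,kL]$; (b) both the $x$-stick and the $y$-stick are $\{x,y\}$-good; (c) for every $v\sim x$ the $v$-stick is $\{x\}$-good and for every $w\sim y$ the $w$-stick is $\{y\}$-good, and if $v$ is adjacent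 to both $x$ and $y$ then the $v$-stick is $\{x,y\}$-good (all sticks at level $k$). *)

(* Defs.v *)
From HB Require Import structures.
From mathcomp Require Import all_boot all_order all_algebra.
From mathcomp Require Import reals.
Set Implicit Arguments. Unset Strict Implicit. Unset Printing Implicit Defensive.
Import Order.TTheory GRing.Theory Num.Theory.
Local Open Scope ring_scope.

Section BakSneppen.
Variable T : finType.
Variable R : realType.

(* A configuration; [true] encodes the value 1, [false] the value 0. *)
Definition config := T -> bool.

(* A clock ring: its time, the vertex whose clock rings, and its mark
   (Bernoulli values; only the values on the closed neighbourhood are used). *)
Record event := Event { ev_time : R; ev_vertex : T; ev_mark : T -> bool }.

Definition nbhd (e : rel T) (x : T) : pred T := fun z => (z == x) || e x z.

Definition bs_step (e : rel T) (eta : config) (ev : event) : config :=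
  let x := ev_vertex ev in
  if (~~ eta x) || [forall z, eta z]
  then fun z => if nbhd e x z then ev_mark ev z else eta z
  else eta.

(* Configuration at time t, starting from eta0 at the start of the window,
   when evs lists (chronologically) the rings of the window. *)
Definition config_at (e : rel T) (evs : seq event) (eta0 : config) (t : R) : config :=
  foldl (bs_step e) eta0 [seq ev <- evs | ev_time ev <= t].

Definition stick_good (evs : seq event) (x : T) (A : pred T) : bool :=
  all (fun ev => (ev_vertex ev == x) ==> [forall a, A a ==> ~~ ev_mark ev a]) evs.

Definition rings_at (evs : seq event) (x : T) : bool :=
  has (fun ev => ev_vertex ev == x) evs.

Definition nice (e : rel T) (evs : seq event) (x y : T) : Prop :=
  (rings_at evs x /\ rings_at evs y) /\
  (stick_good evs x (pred2 x y) /\ stick_good evs y (pred2 x y)) /\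
  ((forall v, e v x -> stick_good evs v (pred1 x)) /\
   (forall w, e w y -> stick_good evs w (pred1 y)) /\
   (forall v, e v x -> e v y -> stick_good evs v (pred2 x y))).

End BakSneppen.

(* Main.v *)
Require Import Defs.
From HB Require Import structures.
From mathcomp Require Import all_boot all_order all_algebra.
From mathcomp Require Import reals.
Import Order.TTheory GRing.Theory Num.Theory.
Local Open Scope ring_scope.
Set Implicit Arguments. Unset Strict Implicit.

Section Aux.
Variables (T : finType) (R : realType) (e : rel T).

Definition goodz (z : T) (ev : event T R) : bool :=
  nbhd e (ev_vertex ev) z ==> ~~ ev_mark ev z.

Lemma step_mono (eta : config T) ev z :
  goodz z ev -> bs_step e eta ev z -> eta z.
Proof.
rewrite /goodz /bs_step; case: ifP => _ //.
by case: (nbhd e (ev_vertex ev) z) => //= /negbTE ->.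
Qed.

Lemma foldl_mono (s : seq (event T R)) (eta : config T) z :
  all (goodz z) s -> foldl (bs_step e) eta s z -> eta z.
Proof.
elim: s eta => [|ev s IH] eta //= /andP[g gs] H.
exact: (step_mono g (IH _ gs H)).
Qed.

Lemma P_pres (s : seq (event T R)) (eta : config T) x y :
  all (goodz x) s -> all (goodz y) s -> ~~ eta x || ~~ eta y ->
  ~~ foldl (bs_step e) eta s x || ~~ foldl (bs_step e) eta s y.
Proof.
move=> gx gy; case/orP=> H; apply/orP; [left|right]; apply: contra H;
  exact: foldl_mono.
Qed.

Lemma ring_kill (eta : config T) ev x y :
  ev_vertex ev = x -> e x y -> goodz y ev -> ~~ eta x || ~~ eta y ->
  ~~ bs_step e eta ev y.
Proof.
move=> hv hxy; rewrite /goodz /bs_step hv.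
have hn : nbhd e x y by rewrite /nbhd hxy orbT.
rewrite hn /= => gy P; case: ifP => [_|]; first by rewrite hn.
move=> /negbT; rewrite negb_or negbK => /andP[hx _].
by move: P; rewrite hx.
Qed.

Lemma fold_kill (s : seq (event T R)) (eta : config T) x y :
  e x y -> all (goodz x) s -> all (goodz y) s ->
  has (fun ev => ev_vertex ev == x) s -> ~~ eta x || ~~ eta y ->
  ~~ foldl (bs_step e) eta s y.
Proof.
move=> hxy; elim: s eta => [|ev s IH] eta //= /andP[gx gxs] /andP[gy gys] /orP[/eqP hv|hs] P.
- apply: contra (ring_kill hv hxy gy P); exact: foldl_mono.
- apply: IH => //.
  have := @P_pres [:: ev] eta x y.
  by rewrite /= gx gy; apply.
Qed.
Lemma good_all (s : seq (event T R)) z (A : pred T) :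
  A z -> stick_good s z A -> (forall v, e v z -> stick_good s v (pred1 z)) ->
  all (goodz z) s.
Proof.
move=> Az; elim: s => [|ev s IH] //= /andP[h1 h2] H.
apply/andP; split; last first.
  by apply: IH => // v hv; have /andP[] := H v hv.
rewrite /goodz /nbhd; apply/implyP => /orP[/eqP hv|hv].
- move: h1; rewrite -hv eqxx /= => /forallP /(_ z).
  by rewrite Az.
- have /andP[+ _] := H _ hv; rewrite eqxx /= => /forallP /(_ z).
  by rewrite /= eqxx.
Qed.
End Aux.

Theorem proposition1 (T : finType) (R : realType) (e : rel T)
  (e_sym : symmetric e) (e_irr : irreflexive e)
  (e_conn : forall u v : T, connect e u v)
  (L : R) (L_pos : 0 < L) (k : nat) (k_pos : (0 < k)%N)
  (evs : seq (event T R))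
  (evs_window : all (fun ev => ((k.-1)%:R * L < ev_time ev) && (ev_time ev <= k%:R * L)) evs)
  (evs_sorted : sorted (fun a b => ev_time a < ev_time b) evs)
  (eta0 : config T) (x y : T) (xy : e x y)
  (Hnice : nice e evs x y)
  (H0 : ~~ eta0 x || ~~ eta0 y) :
  ~~ config_at e evs eta0 (k%:R * L) x && ~~ config_at e evs eta0 (k%:R * L) y.
Proof.
rewrite /config_at.
have -> : [seq ev <- evs | ev_time ev <= k%:R * L] = evs.
  apply/all_filterP; apply: sub_all evs_window => ev /andP[]//.
case: Hnice => [[rx ry] [[gx gy] [gvx [gwy _]]]].
have Gx : all (goodz e x) evs.
  apply: (good_all (A := pred2 x y)) => //; by rewrite /= eqxx.
have Gy : all (goodz e y) evs.
  apply: (good_all (A := pred2 x y)) => //; by rewrite /= eqxx orbT.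
apply/andP; split.
- apply: (fold_kill (x := y)) => //; first by rewrite e_sym.
  by rewrite orbC.
- exact: (fold_kill (x := x)).
Qed.
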